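(* Let $\alpha\in(0,1)$, $n\ge1$, and let $(x_{i1},x_{i2},y_i)\in\mathbb R^3$, $i=1,\dots,n$. Write $s_j(\theta)=\frac1n\sum_{i=1}^n\mathrm S^{\rm E}_{\alpha,\theta}(x_{ij},y_i)$ for $j=1,2$. Suppose that $s_1(\theta)\le s_2(\theta)$ for every $\theta\in\{x_{11},x_{12},y_1,\dots,x_{n1},x_{n2},y_n\}$, and that $\lim_{\theta\uparrow\theta_0}s_1(\theta)\le\lim_{\theta\uparrow\theta_0}s_2(\theta)$ for every $\theta_0\in\{x_{11},x_{12},\dots,x_{n1},x_{n2}\}$. Then $s_1(\theta)\le s_2(\theta)$ for every $\theta\in\mathbb R$, and consequently $\frac1n\sum_{i=1}^n\mathrm S(x_{i1},y_i)\le\frac1n\sum_{i=1}^n\mathrm S(x_{i2},y_i)$ for every $\mathrm S\in\mathcal S^{\rm E}_\alpha$ (i.e. $(x_{i1})_i$ dominates $(x_{i2})_i$ for $\alpha$-expectile prediction). In the case $\alpha=1/2$ the same conclusion holds if the condition at the points $\theta\in\{y_1,\dots,y_n\}$ is omitted.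
   Context: $(t)_+=\max(t,0)$. For convex $\phi:\mathbb R\to\mathbb R$, $\phi'$ is its left-hand derivative. $\mathcal S^{\rm E}_\alpha$ is the class of all scoring functions $\mathrm S(x,y)=|\mathbb 1(y<x)-\alpha|\,(\phi(y)-\phi(x)-\phi'(x)(y-x))$ with $\phi$ convex. The elementary expectile scoring function is $\mathrm S^{\rm E}_{\alpha,\theta}(x,y)=|\mathbb 1(y<x)-\alpha|\big((y-\theta)_+-(x-\theta)_+-(y-x)\mathbb 1(\theta<x)\big)$, i.e. it equals $(1-\alpha)|y-\theta|$ if $y\le\theta<x$, $\alpha|y-\theta|$ if $x\le\theta<y$, and $0$ otherwise. *)

(* Defs.v *)
From Stdlib Require Import Reals Lra.
Open Scope R_scope.

Fixpoint rsum (f : nat -> R) (n : nat) : R :=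
  match n with O => 0 | S k => rsum f k + f k end.


Definition ind_lt (y x : R) : R := if Rlt_dec y x then 1 else 0.

Definition pos_part (t : R) : R := Rmax t 0.

Definition SE (alpha theta x y : R) : R :=
  Rabs (ind_lt y x - alpha) *
  (pos_part (y - theta) - pos_part (x - theta) - (y - x) * ind_lt theta x).

Definition s_avg (alpha : R) (n : nat) (x y : nat -> R) (theta : R) : R :=
  / INR n * rsum (fun i => SE alpha theta (x i) (y i)) n.

Definition left_lim (f : R -> R) (x0 l : R) : Prop :=
  forall eps, 0 < eps -> exists delta, 0 < delta /\
    forall t, x0 - delta < t < x0 -> Rabs (f t - l) < eps.

Definition convex (phi : R -> R) : Prop :=
  forall a b t, 0 <= t <= 1 ->
    phi (t * a + (1 - t) * b) <= t * phi a + (1 - t) * phi b.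

Definition is_left_deriv (phi dphi : R -> R) : Prop :=
  forall x, left_lim (fun t => (phi t - phi x) / (t - x)) x (dphi x).

Definition S_phi (alpha : R) (phi dphi : R -> R) (x y : R) : R :=
  Rabs (ind_lt y x - alpha) * (phi y - phi x - dphi x * (y - x)).

Definition avg_score (alpha : R) (phi dphi : R -> R) (n : nat) (x y : nat -> R) : R :=
  / INR n * rsum (fun i => S_phi alpha phi dphi (x i) (y i)) n.

Definition dominates (alpha : R) (n : nat) (x1 x2 y : nat -> R) : Prop :=
  (forall theta, s_avg alpha n x1 y theta <= s_avg alpha n x2 y theta) /\
  (forall phi dphi, convex phi -> is_left_deriv phi dphi ->
     avg_score alpha phi dphi n x1 y <= avg_score alpha phi dphi n x2 y).

Definition left_lim_cond (alpha : R) (n : nat) (x1 x2 y : nat -> R) : Prop :=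
  forall theta0, (exists i, (i < n)%nat /\ (theta0 = x1 i \/ theta0 = x2 i)) ->
    forall l1 l2, left_lim (s_avg alpha n x1 y) theta0 l1 ->
                  left_lim (s_avg alpha n x2 y) theta0 l2 -> l1 <= l2.

(* Main.v *)
Require Import Defs.
From Stdlib Require Import Reals Lra List Classical.
Open Scope R_scope.

Lemma convex3 phi : convex phi -> forall a b c, a < b < c ->
  (c - a) * phi b <= (c - b) * phi a + (b - a) * phi c.
Proof.
  intros Hc a b c [Hab Hbc].
  set (t := (c - b) / (c - a)).
  assert (Ht : 0 <= t <= 1).
  { unfold t; split.
    - unfold Rdiv; apply Rmult_le_pos; [lra| left; apply Rinv_0_lt_compat; lra].
    - apply Rmult_le_reg_r with (c - a); [lra|].
      unfold Rdiv; rewrite Rmult_assoc, Rinv_l; lra. }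
  specialize (Hc a c t Ht).
  replace (t * a + (1 - t) * c) with b in Hc by (unfold t; field; lra).
  apply Rmult_le_compat_l with (r := c - a) in Hc; [|lra].
  replace ((c - b) * phi a + (b - a) * phi c) with ((c - a) * (t * phi a + (1 - t) * phi c)).
  exact Hc.
  unfold t; field; lra.
Qed.

Lemma quot_eq phi x s : s <> x -> (phi s - phi x) / (s - x) * (s - x) = phi s - phi x.
Proof. intros; field; lra. Qed.

Lemma supp phi dphi : convex phi -> is_left_deriv phi dphi ->
  forall x t, phi t >= phi x + dphi x * (t - x).
Proof.
  intros Hc Hd x t.
  destruct (Rtotal_order t x) as [Htx|[Htx|Htx]].
  - apply Rnot_lt_ge; intro Hn.
    set (Qt := (phi t - phi x) / (t - x)).
    assert (EQt : Qt * (t - x) = phi t - phi x) by (apply quot_eq; lra).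
    assert (HQ : Qt > dphi x) by nra.
    destruct (Hd x (Qt - dphi x) ltac:(lra)) as [del [Hdel H]].
    set (s := (Rmax t (x - del) + x) / 2).
    assert (Hm1 := Rmax_l t (x - del)). assert (Hm2 := Rmax_r t (x - del)).
    assert (Hm3 : Rmax t (x - del) < x) by (apply Rmax_lub_lt; lra).
    specialize (H s ltac:(unfold s; lra)). simpl in H.
    set (Qs := (phi s - phi x) / (s - x)) in H.
    assert (EQs : Qs * (s - x) = phi s - phi x) by (apply quot_eq; unfold s; lra).
    assert (C := convex3 phi Hc t s x ltac:(unfold s; lra)).
    assert (Qt <= Qs).
    { assert (Hsx : s - x < 0) by (unfold s; lra).
      assert (K : (x-t)*(Qs*(s-x)) <= (x-s)*(Qt*(t-x))) by (rewrite EQs, EQt; lra).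
      assert (P : 0 < (x-s)*(x-t)) by (apply Rmult_lt_0_compat; lra).
      assert (K2 : (x-s)*(x-t)*(Qt - Qs) <= 0) by lra.
      destruct (Rle_dec Qt Qs); [auto|].
      assert (0 < (x-s)*(x-t)*(Qt - Qs)) by (apply Rmult_lt_0_compat; lra). lra. }
    apply Rabs_def2 in H. lra.
  - subst; lra.
  - apply Rnot_lt_ge; intro Hn.
    set (Qt := (phi t - phi x) / (t - x)).
    assert (EQt : Qt * (t - x) = phi t - phi x) by (apply quot_eq; lra).
    assert (HQ : Qt < dphi x) by nra.
    destruct (Hd x (dphi x - Qt) ltac:(lra)) as [del [Hdel H]].
    set (s := x - del / 2).
    specialize (H s ltac:(unfold s; lra)). simpl in H.
    set (Qs := (phi s - phi x) / (s - x)) in H.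
    assert (EQs : Qs * (s - x) = phi s - phi x) by (apply quot_eq; unfold s; lra).
    assert (C := convex3 phi Hc s x t ltac:(unfold s; lra)).
    assert (Qs <= Qt).
    { assert (Hsx : s - x < 0) by (unfold s; lra).
      assert (K : 0 <= (t-x)*(Qs*(s-x)) + (x-s)*(Qt*(t-x))) by (rewrite EQs, EQt; lra).
      assert (P : 0 < (x-s)*(t-x)) by (apply Rmult_lt_0_compat; lra).
      assert (K2 : (x-s)*(t-x)*(Qs - Qt) <= 0) by lra.
      destruct (Rle_dec Qs Qt); [auto|].
      assert (0 < (x-s)*(t-x)*(Qs - Qt)) by (apply Rmult_lt_0_compat; lra). lra. }
    apply Rabs_def2 in H. lra.
Qed.

Lemma strict_gap phi dphi : convex phi -> is_left_deriv phi dphi ->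
  forall p q, p <= q -> dphi p < dphi q ->
  phi q - phi p - dphi p * (q - p) > 0.
Proof.
  intros Hc Hd p q Hpq Hlt.
  assert (S1 := supp phi dphi Hc Hd p q).
  destruct (Rle_lt_or_eq_dec _ _ Hpq) as [Hpq'|E]; [|subst; lra].
  destruct (Rgt_ge_dec (phi q - phi p - dphi p * (q - p)) 0) as [G|G]; [auto|].
  exfalso.
  destruct (Hd q (dphi q - dphi p) ltac:(lra)) as [del [Hdel H]].
  set (t := (Rmax p (q - del) + q) / 2).
  assert (Hm1 := Rmax_l p (q - del)). assert (Hm2 := Rmax_r p (q - del)).
  assert (Hm3 : Rmax p (q - del) < q) by (apply Rmax_lub_lt; lra).
  specialize (H t ltac:(unfold t; lra)). simpl in H.
  assert (S2 := supp phi dphi Hc Hd p t).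
  assert (C := convex3 phi Hc p t q ltac:(unfold t; lra)).
  assert (Eq : phi q = phi p + dphi p * (q - p)) by lra.
  rewrite Eq in C.
  assert (C2 : (q - p) * phi t <= (q - p) * (phi p + dphi p * (t - p))) by (ring_simplify; ring_simplify in C; lra).
  apply Rmult_le_reg_l in C2; [|lra].
  assert (E : phi t = phi p + dphi p * (t - p)) by lra.
  replace ((phi t - phi q) / (t - q)) with (dphi p) in H.
  2:{ rewrite E. field_simplify; [|unfold t; lra].
      rewrite Eq. field. unfold t; lra. }
  apply Rabs_def2 in H. lra.
Qed.

Fixpoint lsum (r : list (R*R)) (g : R -> R) : R :=
  match r with nil => 0 | (c,th) :: r' => c * g th + lsum r' g end.

Lemma lsum_ext r g h : (forall t, g t = h t) -> lsum r g = lsum r h.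
Proof. intros H; induction r as [|[c t] r IH]; simpl; [auto|rewrite H, IH; auto]. Qed.
Lemma lsum_plus r g h : lsum r (fun t => g t + h t) = lsum r g + lsum r h.
Proof. induction r as [|[c t] r IH]; simpl; [lra|rewrite IH; ring]. Qed.
Lemma lsum_scal r a g : lsum r (fun t => a * g t) = a * lsum r g.
Proof. induction r as [|[c t] r IH]; simpl; [lra|rewrite IH; ring]. Qed.
Lemma lsum_minus r g h : lsum r (fun t => g t - h t) = lsum r g - lsum r h.
Proof. induction r as [|[c t] r IH]; simpl; [lra|rewrite IH; ring]. Qed.
Lemma lsum_zero r g : (forall c t, In (c,t) r -> c * g t = 0) -> lsum r g = 0.
Proof. induction r as [|[c t] r IH]; simpl; intros H; [lra|].
  rewrite (H c t (or_introl eq_refl)), IH; [lra|]. intros; apply H; auto. Qed.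
Lemma lsum_mono r g h : (forall c t, In (c,t) r -> 0 <= c) -> (forall t, g t <= h t) ->
  lsum r g <= lsum r h.
Proof. induction r as [|[c t] r IH]; simpl; intros H1 H2; [lra|].
  assert (0 <= c) by (apply (H1 c t); auto).
  assert (c * g t <= c * h t) by (apply Rmult_le_compat_l; auto).
  assert (lsum r g <= lsum r h) by (apply IH; [intros; apply (H1 c0 t0); auto|auto]). lra. Qed.

Lemma rsum_plus f g n : rsum (fun i => f i + g i) n = rsum f n + rsum g n.
Proof. induction n; simpl; [lra|rewrite IHn; ring]. Qed.
Lemma rsum_scal a f n : rsum (fun i => a * f i) n = a * rsum f n.
Proof. induction n; simpl; [lra|rewrite IHn; ring]. Qed.
Lemma rsum_ext f g n : (forall i, (i < n)%nat -> f i = g i) -> rsum f n = rsum g n.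
Proof. induction n; simpl; intros H; [auto|]. rewrite IHn, H; auto. Qed.

Lemma swap r F n : rsum (fun i => lsum r (fun t => F t i)) n = lsum r (fun t => rsum (fun i => F t i) n).
Proof.
  induction r as [|[c t] r IH]; simpl.
  - induction n; simpl; [auto|rewrite IHn; ring].
  - rewrite rsum_plus, rsum_scal, IH. auto.
Qed.

Fixpoint ins (a : R) (l : list R) : list R :=
  match l with nil => a :: nil | b :: l' => if Rle_dec a b then a :: b :: l' else b :: ins a l' end.
Fixpoint isort (l : list R) : list R := match l with nil => nil | a :: l' => ins a (isort l') end.
Fixpoint srt (l : list R) : Prop :=
  match l with nil => True | a :: l' => (forall p, In p l' -> a <= p) /\ srt l' end.

Lemma ins_In a l p : In p (ins a l) <-> p = a \/ In p l.
Proof.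
  induction l as [|b l IH]; simpl. { intuition. }
  destruct (Rle_dec a b); simpl. { intuition. }
  rewrite IH. intuition.
Qed.
Lemma isort_In l p : In p (isort l) <-> In p l.
Proof. induction l as [|a l IH]; simpl; [tauto|]. rewrite ins_In, IH. intuition. Qed.
Lemma ins_srt a l : srt l -> srt (ins a l).
Proof.
  induction l as [|b l IH]; simpl; intros H. { split; [tauto|auto]. }
  destruct H as [H1 H2].
  destruct (Rle_dec a b) as [Hab|Hab]; simpl.
  - split; [|split; auto]. intros p [<-|Hp]; [auto|]. specialize (H1 p Hp); lra.
  - split; [|auto]. intros p Hp. apply ins_In in Hp. destruct Hp as [->|Hp]; [lra|auto].
Qed.
Lemma isort_srt l : srt (isort l).
Proof. induction l; simpl; auto. apply ins_srt; auto. Qed.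

Definition thk (phi dphi : R -> R) (q1 q2 : R) : R :=
  if Rlt_dec (dphi q1) (dphi q2)
  then q2 - (phi q2 - phi q1 - dphi q1 * (q2 - q1)) / (dphi q2 - dphi q1) else q1.

Fixpoint rep (phi dphi : R -> R) (l : list R) : list (R*R) :=
  match l with
  | q1 :: ((q2 :: _) as rest) => (dphi q2 - dphi q1, thk phi dphi q1 q2) :: rep phi dphi rest
  | _ => nil end.

Lemma dmono phi dphi : convex phi -> is_left_deriv phi dphi ->
  forall p q, p <= q -> dphi p <= dphi q.
Proof.
  intros Hc Hd p q H.
  assert (A1 := supp phi dphi Hc Hd p q). assert (A2 := supp phi dphi Hc Hd q p).
  destruct (Rle_lt_or_eq_dec _ _ H); [|subst; lra]. nra.
Qed.

Lemma thk_props phi dphi : convex phi -> is_left_deriv phi dphi ->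
  forall q1 q2, q1 <= q2 ->
  q1 <= thk phi dphi q1 q2 /\ (dphi q1 < dphi q2 -> thk phi dphi q1 q2 < q2) /\
  (forall p, phi q1 + dphi q1 * (p - q1) + (dphi q2 - dphi q1) * (p - thk phi dphi q1 q2)
     = phi q2 + dphi q2 * (p - q2)).
Proof.
  intros Hc Hd q1 q2 H.
  assert (A1 := supp phi dphi Hc Hd q1 q2). assert (A2 := supp phi dphi Hc Hd q2 q1).
  assert (M := dmono phi dphi Hc Hd q1 q2 H).
  unfold thk. destruct (Rlt_dec (dphi q1) (dphi q2)) as [L|L].
  - assert (G := strict_gap phi dphi Hc Hd q1 q2 H L).
    set (G0 := phi q2 - phi q1 - dphi q1 * (q2 - q1)) in *.
    set (c := dphi q2 - dphi q1).
    assert (Hc0 : 0 < c) by (unfold c; lra).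
    assert (E : G0 / c * c = G0) by (field; lra).
    assert (G0 / c > 0) by (unfold Rdiv; apply Rmult_gt_0_compat; [lra|apply Rinv_0_lt_compat; lra]).
    assert (G0 <= c * (q2 - q1)) by (unfold G0, c; nra).
    split; [|split].
    + assert (G0 / c <= q2 - q1).
      { apply Rmult_le_reg_r with c; [lra|]. rewrite E. lra. }
      lra.
    + intros _. lra.
    + intros p. unfold G0, c; field. fold c; lra.
  - assert (dphi q1 = dphi q2) by lra.
    split; [lra|split; [lra|]]. intros p.
    destruct (Rle_lt_or_eq_dec _ _ H) as [H'|H']; [|subst; ring].
    assert (phi q2 - phi q1 = dphi q1 * (q2 - q1)) by (rewrite H0 in A1; rewrite H0; nra).
    rewrite <- H0. nra.
Qed.

Lemma pos_part_nonpos t : t <= 0 -> pos_part t = 0.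
Proof. intros; unfold pos_part; apply Rmax_right; auto. Qed.
Lemma pos_part_pos t : 0 <= t -> pos_part t = t.
Proof. intros; unfold pos_part; apply Rmax_left; auto. Qed.
Lemma ind_lt_1 a b : a < b -> ind_lt a b = 1.
Proof. intros; unfold ind_lt; destruct Rlt_dec; lra. Qed.
Lemma ind_lt_0 a b : ~ a < b -> ind_lt a b = 0.
Proof. intros; unfold ind_lt; destruct Rlt_dec; lra. Qed.

Lemma rep_inv phi dphi : convex phi -> is_left_deriv phi dphi ->
  forall rest q1, srt (q1 :: rest) -> forall c t, In (c,t) (rep phi dphi (q1 :: rest)) ->
  0 <= c /\ q1 <= t.
Proof.
  intros Hc Hd rest. induction rest as [|q2 rest IH]; intros q1 Hs c t Hin; simpl in Hin.
  - destruct Hin.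
  - destruct Hs as [H1 H2].
    assert (Hq : q1 <= q2) by (apply H1; simpl; auto).
    destruct Hin as [E|Hin].
    + inversion E; subst. split.
      * assert (M := dmono phi dphi Hc Hd q1 q2 Hq). lra.
      * apply (thk_props phi dphi Hc Hd q1 q2 Hq).
    + destruct (IH q2 H2 c t Hin). split; lra.
Qed.

Lemma rep_ok phi dphi : convex phi -> is_left_deriv phi dphi ->
  forall rest q1, srt (q1 :: rest) -> forall p, In p (q1 :: rest) ->
  phi p = phi q1 + dphi q1 * (p - q1) + lsum (rep phi dphi (q1 :: rest)) (fun t => pos_part (p - t)) /\
  dphi p = dphi q1 + lsum (rep phi dphi (q1 :: rest)) (fun t => ind_lt t p).
Proof.
  intros Hc Hd rest. induction rest as [|q2 rest IH]; intros q1 Hs p Hp.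
  - simpl in Hp |- *. destruct Hp as [<-|[]]. split; ring.
  - assert (Hs' := Hs). destruct Hs' as [H1 H2].
    assert (Hq : q1 <= q2) by (apply H1; simpl; auto).
    destruct (thk_props phi dphi Hc Hd q1 q2 Hq) as [T1 [T2 T3]].
    assert (M := dmono phi dphi Hc Hd q1 q2 Hq).
    change (rep phi dphi (q1 :: q2 :: rest)) with
      ((dphi q2 - dphi q1, thk phi dphi q1 q2) :: rep phi dphi (q2 :: rest)).
    cbn [lsum].
    destruct Hp as [<-|Hp].
    + rewrite (lsum_zero _ (fun t => pos_part (q1 - t))).
      2:{ intros c t Hin. destruct (rep_inv phi dphi Hc Hd rest q2 H2 c t Hin).
          rewrite pos_part_nonpos; lra. }
      rewrite (lsum_zero _ (fun t => ind_lt t q1)).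
      2:{ intros c t Hin. destruct (rep_inv phi dphi Hc Hd rest q2 H2 c t Hin).
          rewrite ind_lt_0; lra. }
      rewrite pos_part_nonpos by lra. rewrite ind_lt_0 by lra. split; ring.
    + assert (Hqp : q2 <= p).
      { destruct Hp as [<-|Hp]; [lra|]. destruct H2 as [H3 _]. apply H3; auto. }
      destruct (IH q2 H2 p Hp) as [E1 E2].
      assert (K1 : (dphi q2 - dphi q1) * pos_part (p - thk phi dphi q1 q2) =
                   (dphi q2 - dphi q1) * (p - thk phi dphi q1 q2)).
      { destruct (Rlt_dec (dphi q1) (dphi q2)) as [L|L].
        - rewrite pos_part_pos; [auto|]. specialize (T2 L). lra.
        - replace (dphi q2 - dphi q1) with 0 by lra. ring. }
      assert (K2 : (dphi q2 - dphi q1) * ind_lt (thk phi dphi q1 q2) p = dphi q2 - dphi q1).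
      { destruct (Rlt_dec (dphi q1) (dphi q2)) as [L|L].
        - rewrite ind_lt_1; [ring|]. specialize (T2 L). lra.
        - replace (dphi q2 - dphi q1) with 0 by lra. ring. }
      rewrite K1, K2. split.
      * rewrite E1. rewrite <- (T3 p). ring.
      * rewrite E2. ring.
Qed.

Lemma B_rep phi dphi : convex phi -> is_left_deriv phi dphi ->
  forall l, srt l -> forall x y, In x l -> In y l ->
  phi y - phi x - dphi x * (y - x) =
  lsum (rep phi dphi l) (fun t => pos_part (y - t) - pos_part (x - t) - (y - x) * ind_lt t x).
Proof.
  intros Hc Hd l Hs x y Hx Hy.
  destruct l as [|q1 rest]; [destruct Hx|].
  destruct (rep_ok phi dphi Hc Hd rest q1 Hs x Hx) as [Ex Dx].
  destruct (rep_ok phi dphi Hc Hd rest q1 Hs y Hy) as [Ey Dy].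
  rewrite lsum_minus, lsum_minus, lsum_scal.
  rewrite Ex, Ey, Dx. ring.
Qed.

Fixpoint pts (x1 x2 y : nat -> R) (n : nat) : list R :=
  match n with O => nil | S k => x1 k :: x2 k :: y k :: pts x1 x2 y k end.

Lemma In_pts x1 x2 y n i : (i < n)%nat -> In (x1 i) (pts x1 x2 y n) /\ In (x2 i) (pts x1 x2 y n) /\ In (y i) (pts x1 x2 y n).
Proof.
  induction n; intros H; [inversion H|]. simpl.
  destruct (Nat.eq_dec i n) as [->|Hne]; [tauto|].
  assert (i < n)%nat by (inversion H; [congruence|auto]). specialize (IHn H0). tauto.
Qed.

Lemma pts_In x1 x2 y n p : In p (pts x1 x2 y n) -> exists i, (i < n)%nat /\ (p = x1 i \/ p = x2 i \/ p = y i).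
Proof.
  induction n; simpl; [tauto|]. intros [E|[E|[E|H]]].
  - exists n; split; [auto|left; auto].
  - exists n; split; [auto|right; left; auto].
  - exists n; split; [auto|right; right; auto].
  - destruct (IHn H) as [i [Hi Hp]]. exists i; split; [auto|auto].
Qed.

Lemma rep_nonneg phi dphi : convex phi -> is_left_deriv phi dphi ->
  forall l, srt l -> forall c t, In (c,t) (rep phi dphi l) -> 0 <= c.
Proof.
  intros Hc Hd l Hs c t Hin. destruct l as [|q1 rest]; [destruct Hin|].
  apply (rep_inv phi dphi Hc Hd rest q1 Hs c t Hin).
Qed.

Lemma avg_rep alpha phi dphi n x y l : convex phi -> is_left_deriv phi dphi -> srt l ->
  (forall i, (i < n)%nat -> In (x i) l /\ In (y i) l) ->
  avg_score alpha phi dphi n x y = lsum (rep phi dphi l) (fun t => s_avg alpha n x y t).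
Proof.
  intros Hc Hd Hs Hin. unfold avg_score, s_avg.
  rewrite lsum_scal. f_equal. rewrite <- swap. apply rsum_ext.
  intros i Hi. destruct (Hin i Hi) as [Hx Hy]. unfold S_phi, SE.
  rewrite (B_rep phi dphi Hc Hd l Hs (x i) (y i) Hx Hy), lsum_scal. auto.
Qed.

Lemma phi_dom alpha n x1 x2 y :
  (forall theta, s_avg alpha n x1 y theta <= s_avg alpha n x2 y theta) ->
  forall phi dphi, convex phi -> is_left_deriv phi dphi ->
  avg_score alpha phi dphi n x1 y <= avg_score alpha phi dphi n x2 y.
Proof.
  intros H phi dphi Hc Hd.
  set (l := isort (pts x1 x2 y n)).
  assert (Hs : srt l) by apply isort_srt.
  assert (Hin : forall i, (i < n)%nat -> In (x1 i) l /\ In (x2 i) l /\ In (y i) l).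
  { intros i Hi. unfold l. rewrite !isort_In. apply In_pts; auto. }
  rewrite (avg_rep alpha phi dphi n x1 y l Hc Hd Hs) by (intros i Hi; specialize (Hin i Hi); tauto).
  rewrite (avg_rep alpha phi dphi n x2 y l Hc Hd Hs) by (intros i Hi; specialize (Hin i Hi); tauto).
  apply lsum_mono; auto. apply (rep_nonneg phi dphi Hc Hd l Hs).
Qed.

Definition Lb (alpha b t x y : R) : R :=
  Rabs (ind_lt y x - alpha) *
  ((if Rle_dec b y then y - t else 0) - (if Rle_dec b x then x - t else 0)
   - (y - x) * (if Rle_dec b x then 1 else 0)).

Lemma term_eq alpha a b t x y : a <= t < b -> ~ (a < x < b) -> ~ (a < y < b) ->
  SE alpha t x y = Lb alpha b t x y.
Proof.
  intros Ht Hx Hy. unfold SE, Lb. f_equal.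
  destruct (Rle_dec b y); destruct (Rle_dec b x).
  - rewrite (pos_part_pos (y - t)), (pos_part_pos (x - t)), ind_lt_1; lra.
  - rewrite (pos_part_pos (y - t)), (pos_part_nonpos (x - t)), ind_lt_0; lra.
  - rewrite (pos_part_nonpos (y - t)), (pos_part_pos (x - t)), ind_lt_1; lra.
  - rewrite (pos_part_nonpos (y - t)), (pos_part_nonpos (x - t)), ind_lt_0; lra.
Qed.

Lemma term_eq_b alpha b x y : x <> b -> SE alpha b x y = Lb alpha b b x y.
Proof.
  intros Hx. unfold SE, Lb. f_equal.
  destruct (Rle_dec b y); destruct (Rle_dec b x).
  - rewrite (pos_part_pos (y - b)), (pos_part_pos (x - b)), ind_lt_1; lra.
  - rewrite (pos_part_pos (y - b)), (pos_part_nonpos (x - b)), ind_lt_0; lra.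
  - rewrite (pos_part_nonpos (y - b)), (pos_part_pos (x - b)), ind_lt_1; lra.
  - rewrite (pos_part_nonpos (y - b)), (pos_part_nonpos (x - b)), ind_lt_0; lra.
Qed.

Lemma rabs_half u v : Rabs (ind_lt u v - 1/2) = 1/2.
Proof. unfold ind_lt; destruct Rlt_dec; [rewrite Rabs_right|rewrite Rabs_left]; lra. Qed.

Lemma term_diff_half a b t x1 x2 y : a <= t < b -> ~ (a < x1 < b) -> ~ (a < x2 < b) ->
  SE (1/2) t x2 y - SE (1/2) t x1 y = Lb (1/2) b t x2 y - Lb (1/2) b t x1 y.
Proof.
  intros Ht H1 H2. unfold SE, Lb. rewrite !rabs_half.
  assert (E1 : pos_part (x1 - t) + (y - x1) * ind_lt t x1 =
    (if Rle_dec b x1 then x1 - t else 0) + (y - x1) * (if Rle_dec b x1 then 1 else 0)).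
  { destruct (Rle_dec b x1).
    - rewrite (pos_part_pos (x1 - t)), ind_lt_1; lra.
    - rewrite (pos_part_nonpos (x1 - t)), ind_lt_0; lra. }
  assert (E2 : pos_part (x2 - t) + (y - x2) * ind_lt t x2 =
    (if Rle_dec b x2 then x2 - t else 0) + (y - x2) * (if Rle_dec b x2 then 1 else 0)).
  { destruct (Rle_dec b x2).
    - rewrite (pos_part_pos (x2 - t)), ind_lt_1; lra.
    - rewrite (pos_part_nonpos (x2 - t)), ind_lt_0; lra. }
  lra.
Qed.

Definition aff (f : R -> R) : Prop := forall t, f t = f 0 + t * (f 1 - f 0).

Lemma aff_Lb alpha b x y : aff (fun t => Lb alpha b t x y).
Proof. intros t; unfold Lb. destruct Rle_dec; destruct Rle_dec; ring. Qed.

Lemma aff_rsum (F : nat -> R -> R) n : (forall i, aff (F i)) -> aff (fun t => rsum (fun i => F i t) n).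
Proof.
  intros H; induction n; intros t; simpl; [ring|].
  assert (E1 := IHn t). assert (E2 := H n t). cbv beta in E1, E2.
  rewrite E1, E2. ring.
Qed.

Lemma aff_scal c f : aff f -> aff (fun t => c * f t).
Proof. intros H t. rewrite H. ring. Qed.
Lemma aff_minus f g : aff f -> aff g -> aff (fun t => f t - g t).
Proof. intros H1 H2 t. rewrite H1, H2. ring. Qed.

Lemma aff_nonneg f a b th : aff f -> a < b -> a <= th <= b -> 0 <= f a -> 0 <= f b -> 0 <= f th.
Proof.
  intros H Hab Hth Ha Hb. rewrite (H a) in Ha. rewrite (H b) in Hb. rewrite (H th).
  set (m := f 1 - f 0) in *. set (c := f 0) in *.
  assert (E : (b - a) * (c + th * m) = (b - th) * (c + a * m) + (th - a) * (c + b * m)) by ring.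
  assert (0 <= (b - th) * (c + a * m)) by (apply Rmult_le_pos; lra).
  assert (0 <= (th - a) * (c + b * m)) by (apply Rmult_le_pos; lra).
  destruct (Rle_dec 0 (c + th * m)); [auto|].
  assert ((b - a) * (c + th * m) < 0) by (apply Rmult_pos_neg; lra). lra.
Qed.

Lemma aff_lim f g b : aff g -> (exists c, c < b /\ forall t, c < t < b -> f t = g t) ->
  left_lim f b (g b).
Proof.
  intros Hg [c [Hcb Hfg]] eps Heps.
  set (m := g 1 - g 0).
  exists (Rmin (b - c) (eps / (Rabs m + 1))).
  assert (Hpos : 0 < eps / (Rabs m + 1)).
  { unfold Rdiv; apply Rmult_lt_0_compat; [lra|apply Rinv_0_lt_compat]. 
    assert (0 <= Rabs m) by apply Rabs_pos. lra. }
  split. { apply Rmin_glb_lt; lra. }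
  intros t Ht.
  assert (H1 := Rmin_l (b - c) (eps / (Rabs m + 1))).
  assert (H2 := Rmin_r (b - c) (eps / (Rabs m + 1))).
  rewrite Hfg by lra.
  replace (g t - g b) with ((t - b) * m) by (rewrite (Hg t), (Hg b); unfold m; ring).
  rewrite Rabs_mult.
  assert (Hm := Rabs_pos m).
  assert (Rabs (t - b) < eps / (Rabs m + 1)) by (rewrite Rabs_left; lra).
  assert (E : eps / (Rabs m + 1) * (Rabs m + 1) = eps) by (field; lra).
  assert (Rabs (t - b) * Rabs m <= Rabs (t - b) * (Rabs m + 1)).
  { apply Rmult_le_compat_l; [apply Rabs_pos|lra]. }
  assert (Rabs (t - b) * (Rabs m + 1) < eps / (Rabs m + 1) * (Rabs m + 1)).
  { apply Rmult_lt_compat_r; lra. }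
  lra.
Qed.

Lemma exists_gap (l : list R) b : exists c, c < b /\ forall p, In p l -> ~ (c < p < b).
Proof.
  induction l as [|q l IH].
  - exists (b - 1); split; [lra|intros p []].
  - destruct IH as [c [Hc H]].
    destruct (Rlt_dec q b).
    + exists (Rmax c q). split; [apply Rmax_lub_lt; auto|].
      intros p [<-|Hp]; assert (Hm1 := Rmax_l c q); assert (Hm2 := Rmax_r c q).
      * lra.
      * specialize (H p Hp). lra.
    + exists c. split; [auto|]. intros p [<-|Hp]; [lra|auto].
Qed.

Lemma below_split (l : list R) th : (forall p, In p l -> th < p) \/
  exists a, In a l /\ a <= th /\ forall p, In p l -> ~ (a < p <= th).
Proof.
  induction l as [|q l IH].
  - left; intros p [].
  - destruct (Rle_dec q th) as [Hq|Hq].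
    + right. destruct IH as [H|[a [Ha1 [Ha2 Ha3]]]].
      * exists q. split; [left; auto|split; [auto|]]. intros p [<-|Hp]; [lra|]. specialize (H p Hp). lra.
      * destruct (Rle_dec a q).
        -- exists q. split; [left; auto|split; [auto|]]. intros p [<-|Hp]; [lra|].
           specialize (Ha3 p Hp). lra.
        -- exists a. split; [right; auto|split; [auto|]]. intros p [<-|Hp]; [lra|auto].
    + destruct IH as [H|[a [Ha1 [Ha2 Ha3]]]].
      * left. intros p [<-|Hp]; [lra|auto].
      * right. exists a. split; [right; auto|split; [auto|]]. intros p [<-|Hp]; [lra|auto].
Qed.

Lemma above_split (l : list R) th : (forall p, In p l -> p <= th) \/
  exists b, In b l /\ th < b /\ forall p, In p l -> ~ (th < p < b).
Proof.
  induction l as [|q l IH].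
  - left; intros p [].
  - destruct (Rlt_dec th q) as [Hq|Hq].
    + right. destruct IH as [H|[b [Hb1 [Hb2 Hb3]]]].
      * exists q. split; [left; auto|split; [auto|]]. intros p [<-|Hp]; [lra|]. specialize (H p Hp). lra.
      * destruct (Rle_dec q b).
        -- exists q. split; [left; auto|split; [auto|]]. intros p [<-|Hp]; [lra|].
           specialize (Hb3 p Hp). lra.
        -- exists b. split; [right; auto|split; [auto|]]. intros p [<-|Hp]; [lra|auto].
    + destruct IH as [H|[b [Hb1 [Hb2 Hb3]]]].
      * left. intros p [<-|Hp]; [lra|auto].
      * right. exists b. split; [right; auto|split; [auto|]]. intros p [<-|Hp]; [lra|auto].
Qed.

Definition Gb (alpha : R) (n : nat) (x y : nat -> R) (b t : R) : R :=
  / INR n * rsum (fun i => Lb alpha b t (x i) (y i)) n.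

Lemma aff_Gb alpha n x y b : aff (Gb alpha n x y b).
Proof.
  unfold Gb. apply aff_scal.
  apply (aff_rsum (fun i t => Lb alpha b t (x i) (y i))). intros i; apply aff_Lb.
Qed.

Lemma s_eq_G alpha n x y a b t : a <= t < b ->
  (forall i, (i < n)%nat -> ~ (a < x i < b) /\ ~ (a < y i < b)) ->
  s_avg alpha n x y t = Gb alpha n x y b t.
Proof.
  intros Ht H. unfold s_avg, Gb. f_equal. apply rsum_ext. intros i Hi.
  destruct (H i Hi). apply term_eq with a; auto.
Qed.

Lemma sj_lim alpha n x y (L : list R) b :
  (forall i, (i < n)%nat -> In (x i) L /\ In (y i) L) ->
  left_lim (s_avg alpha n x y) b (Gb alpha n x y b b).
Proof.
  intros HL. destruct (exists_gap L b) as [c [Hc Hg]].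
  apply aff_lim; [apply aff_Gb|]. exists c; split; [auto|].
  intros t Ht. apply s_eq_G with c; [lra|].
  intros i Hi; destruct (HL i Hi); split; apply Hg; auto.
Qed.

Lemma rsum_zero f n : (forall i, (i < n)%nat -> f i = 0) -> rsum f n = 0.
Proof. induction n; simpl; intros H; [auto|]. rewrite IHn, H; auto; lra. Qed.
Lemma rsum_minus f g n : rsum f n - rsum g n = rsum (fun i => f i - g i) n.
Proof. induction n; simpl; [lra|rewrite <- IHn; ring]. Qed.

Lemma SE_below alpha t x y : t < x -> t < y -> SE alpha t x y = 0.
Proof. intros; unfold SE. rewrite (pos_part_pos (y - t)), (pos_part_pos (x - t)), (ind_lt_1 t x) by lra. ring. Qed.
Lemma SE_above alpha t x y : x <= t -> y <= t -> SE alpha t x y = 0.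
Proof. intros; unfold SE. rewrite (pos_part_nonpos (y - t)), (pos_part_nonpos (x - t)), (ind_lt_0 t x) by lra. ring. Qed.
Lemma SE_half_below t x1 x2 y : t < x1 -> t < x2 -> SE (1/2) t x1 y = SE (1/2) t x2 y.
Proof. intros; unfold SE. rewrite !rabs_half. rewrite (pos_part_pos (x1 - t)), (pos_part_pos (x2 - t)), !ind_lt_1; lra. Qed.
Lemma SE_half_above t x1 x2 y : x1 <= t -> x2 <= t -> SE (1/2) t x1 y = SE (1/2) t x2 y.
Proof. intros; unfold SE. rewrite !rabs_half. rewrite (pos_part_nonpos (x1 - t)), (pos_part_nonpos (x2 - t)), !ind_lt_0; lra. Qed.

Lemma part1 alpha n x1 x2 y :
  (forall theta, (exists i, (i < n)%nat /\ (theta = x1 i \/ theta = x2 i \/ theta = y i)) ->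
        s_avg alpha n x1 y theta <= s_avg alpha n x2 y theta) ->
  left_lim_cond alpha n x1 x2 y ->
  forall theta, s_avg alpha n x1 y theta <= s_avg alpha n x2 y theta.
Proof.
  intros Hp Hl th.
  set (L := pts x1 x2 y n).
  assert (HL := fun i Hi => In_pts x1 x2 y n i Hi). fold L in HL.
  destruct (below_split L th) as [Hall|[a [Ha1 [Ha2 Ha3]]]].
  { unfold s_avg. rewrite !rsum_zero; [lra| |]; intros i Hi; destruct (HL i Hi) as [? [? ?]];
    apply SE_below; apply Hall; auto. }
  destruct (above_split L th) as [Hall|[b [Hb1 [Hb2 Hb3]]]].
  { unfold s_avg. rewrite !rsum_zero; [lra| |]; intros i Hi; destruct (HL i Hi) as [? [? ?]];
    apply SE_above; apply Hall; auto. }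
  assert (Gap : forall p, In p L -> ~ (a < p < b)).
  { intros p Hp' H. specialize (Ha3 p Hp'). specialize (Hb3 p Hp').
    destruct (Rle_dec p th); [apply Ha3|apply Hb3]; lra. }
  set (Dl := fun t => Gb alpha n x2 y b t - Gb alpha n x1 y b t).
  assert (Haff : aff Dl) by (apply aff_minus; apply aff_Gb).
  assert (NJ : forall x, (forall i, (i < n)%nat -> In (x i) L) ->
     forall i, (i < n)%nat -> ~ (a < x i < b) /\ ~ (a < y i < b)).
  { intros x Hx i Hi. split; apply Gap; [apply Hx; auto|apply HL; auto]. }
  assert (N1 := NJ x1 (fun i Hi => proj1 (HL i Hi))).
  assert (N2 := NJ x2 (fun i Hi => proj1 (proj2 (HL i Hi)))).
  assert (Dth : Dl th = s_avg alpha n x2 y th - s_avg alpha n x1 y th).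
  { unfold Dl. rewrite (s_eq_G alpha n x1 y a b th), (s_eq_G alpha n x2 y a b th); auto; lra. }
  assert (Da : 0 <= Dl a).
  { unfold Dl. rewrite <- (s_eq_G alpha n x1 y a b a), <- (s_eq_G alpha n x2 y a b a); auto; try lra.
    assert (s_avg alpha n x1 y a <= s_avg alpha n x2 y a) by (apply Hp; apply pts_In; auto). lra. }
  assert (Db : 0 <= Dl b).
  { unfold Dl.
    destruct (classic (exists i, (i < n)%nat /\ (b = x1 i \/ b = x2 i))) as [Hx|Hx].
    - assert (Gb alpha n x1 y b b <= Gb alpha n x2 y b b).
      { apply (Hl b Hx).
        - apply sj_lim with L. intros i Hi; destruct (HL i Hi) as [? [? ?]]; auto.
        - apply sj_lim with L. intros i Hi; destruct (HL i Hi) as [? [? ?]]; auto. }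
      lra.
    - assert (E1 : Gb alpha n x1 y b b = s_avg alpha n x1 y b).
      { unfold Gb, s_avg. f_equal. apply rsum_ext. intros i Hi. symmetry. apply term_eq_b.
        intros E. apply Hx. exists i; auto. }
      assert (E2 : Gb alpha n x2 y b b = s_avg alpha n x2 y b).
      { unfold Gb, s_avg. f_equal. apply rsum_ext. intros i Hi. symmetry. apply term_eq_b.
        intros E. apply Hx. exists i; auto. }
      assert (s_avg alpha n x1 y b <= s_avg alpha n x2 y b) by (apply Hp; apply pts_In; auto).
      lra. }
  assert (0 <= Dl th) by (apply (aff_nonneg Dl a b th); auto; lra).
  lra.
Qed.

Fixpoint xpts (x1 x2 : nat -> R) (n : nat) : list R :=
  match n with O => nil | S k => x1 k :: x2 k :: xpts x1 x2 k end.

Lemma In_xpts x1 x2 n i : (i < n)%nat -> In (x1 i) (xpts x1 x2 n) /\ In (x2 i) (xpts x1 x2 n).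
Proof.
  induction n; intros H; [inversion H|]. simpl.
  destruct (Nat.eq_dec i n) as [->|Hne]; [tauto|].
  assert (i < n)%nat by (inversion H; [congruence|auto]). specialize (IHn H0). tauto.
Qed.

Lemma xpts_In x1 x2 n p : In p (xpts x1 x2 n) -> exists i, (i < n)%nat /\ (p = x1 i \/ p = x2 i).
Proof.
  induction n; simpl; [tauto|]. intros [E|[E|H]].
  - exists n; split; [auto|left; auto].
  - exists n; split; [auto|right; auto].
  - destruct (IHn H) as [i [Hi Hp]]. exists i; split; auto.
Qed.

Lemma part2 n x1 x2 y :
  (forall theta, (exists i, (i < n)%nat /\ (theta = x1 i \/ theta = x2 i)) ->
        s_avg (1/2) n x1 y theta <= s_avg (1/2) n x2 y theta) ->
  left_lim_cond (1/2) n x1 x2 y ->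
  forall theta, s_avg (1/2) n x1 y theta <= s_avg (1/2) n x2 y theta.
Proof.
  intros Hp Hl th.
  set (L := pts x1 x2 y n).
  assert (HL := fun i Hi => In_pts x1 x2 y n i Hi). fold L in HL.
  set (X := xpts x1 x2 n).
  assert (HX := fun i Hi => In_xpts x1 x2 n i Hi). fold X in HX.
  destruct (below_split X th) as [Hall|[a [Ha1 [Ha2 Ha3]]]].
  { unfold s_avg. right. f_equal. apply rsum_ext. intros i Hi. destruct (HX i Hi).
    apply SE_half_below; apply Hall; auto. }
  destruct (above_split X th) as [Hall|[b [Hb1 [Hb2 Hb3]]]].
  { unfold s_avg. right. f_equal. apply rsum_ext. intros i Hi. destruct (HX i Hi).
    apply SE_half_above; apply Hall; auto. }
  assert (Gap : forall p, In p X -> ~ (a < p < b)).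
  { intros p Hp' H. specialize (Ha3 p Hp'). specialize (Hb3 p Hp').
    destruct (Rle_dec p th); [apply Ha3|apply Hb3]; lra. }
  set (Dl := fun t => Gb (1/2) n x2 y b t - Gb (1/2) n x1 y b t).
  assert (Haff : aff Dl) by (apply aff_minus; apply aff_Gb).
  assert (DE : forall t, a <= t < b -> Dl t = s_avg (1/2) n x2 y t - s_avg (1/2) n x1 y t).
  { intros t Ht. unfold Dl, Gb, s_avg. rewrite <- !Rmult_minus_distr_l, !rsum_minus. f_equal.
    apply rsum_ext. intros i Hi. destruct (HX i Hi).
    symmetry. apply term_diff_half with a; auto. }
  assert (Da : 0 <= Dl a).
  { rewrite DE by lra.
    assert (s_avg (1/2) n x1 y a <= s_avg (1/2) n x2 y a) by (apply Hp; apply xpts_In; auto). lra. }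
  assert (Db : 0 <= Dl b).
  { unfold Dl.
    assert (Gb (1/2) n x1 y b b <= Gb (1/2) n x2 y b b).
    { apply (Hl b (xpts_In x1 x2 n b Hb1)).
      - apply sj_lim with L. intros i Hi; destruct (HL i Hi) as [? [? ?]]; auto.
      - apply sj_lim with L. intros i Hi; destruct (HL i Hi) as [? [? ?]]; auto. }
    lra. }
  assert (0 <= Dl th) by (apply (aff_nonneg Dl a b th); auto; lra).
  rewrite DE in H by lra. lra.
Qed.

Theorem mainTheorem9 (alpha : R) (n : nat) (x1 x2 y : nat -> R) :
  0 < alpha < 1 -> (1 <= n)%nat ->
  ( ( (forall theta, (exists i, (i < n)%nat /\
          (theta = x1 i \/ theta = x2 i \/ theta = y i)) ->
        s_avg alpha n x1 y theta <= s_avg alpha n x2 y theta) ->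
      left_lim_cond alpha n x1 x2 y ->
      dominates alpha n x1 x2 y )
  /\
    ( alpha = 1 / 2 ->
      (forall theta, (exists i, (i < n)%nat /\ (theta = x1 i \/ theta = x2 i)) ->
        s_avg alpha n x1 y theta <= s_avg alpha n x2 y theta) ->
      left_lim_cond alpha n x1 x2 y ->
      dominates alpha n x1 x2 y ) ).
Proof.
  intros _ _. split.
  - intros Hp Hl. assert (H := part1 alpha n x1 x2 y Hp Hl).
    split; [exact H|]. apply phi_dom; exact H.
  - intros Ha Hp Hl. subst alpha. assert (H := part2 n x1 x2 y Hp Hl).
    split; [exact H|]. apply phi_dom; exact H.
Qed.
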